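(* Let $1\le d<n$, $r=d(n-d)$, and let $t_1,\dots,t_k\in\{1,\dots,r-1\}$. If $\mathfrak C=F_{t_1}F_{t_2}\cdots F_{t_k}(\mathfrak C_{\mathrm{right}})$ is a maximal chain (in particular nonzero), then $\sigma_{\mathfrak C}=s_{t_k}s_{t_{k-1}}\cdots s_{t_1}$, and this is a reduced expression in $\mathsf S_r$.
   Context: $I(d,n)$: $d$-subsets of $\{1,\dots,n\}$ as increasing sequences, ordered by $\underline i\le\underline j$ iff $i_k\le j_k$ for all $k$. Maximal chains $\underline i_r>\cdots>\underline i_0$; chains compared lexicographically via concatenated strings $\underline i_r\cdots\underline i_0$; $\mathfrak C_{\mathrm{right}}$ the smallest. Root operators $f_{s,h}$ ($1\le h\le d$, $h\le s<n-d+h$): $f_{s,h}(i_1\cdots i_d)$ replaces $i_h=s$ by $s+1$ if $i_h=s$ and ($h=d$ or $i_{h+1}\ge s+2$), else $0$. Along a maximal chain $\underline i_t=f_{s_t,h_t}(\underline i_{t-1})$, each admissible pair occurring exactly once; $\tilde f_t:=f_{s_t,h_t}$ for $\mathfrak C_{\mathrm{right}}$; $\sigma_{\mathfrak C}\in\mathsf S_r$ is defined by: the operator from $\underline i_{t-1}$ to $\underline i_t$ in $\mathfrak C$ is $\tilde f_{\sigma_{\mathfrak C}(t)}$. For $1\le t\le r-1$, if the Bruhat interval $[\underline i_{t-1},\underline i_{t+1}]$ has 4 elements $\{\underline i_{t-1},\underline i_t,\underline i'_t,\underline i_{t+1}\}$ and $\underline i'_t>_{lex}\underline i_t$ (right peak),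 $F_t(\mathfrak C)$ is the chain with $\underline i_t$ replaced by $\underline i'_t$; otherwise $F_t(\mathfrak C)=0$, and $F_t(0)=0$. $s_t=(t,t+1)\in\mathsf S_r$. *)

(* Defs.v *)
From mathcomp Require Import all_boot.
Set Implicit Arguments. Unset Strict Implicit. Unset Printing Implicit Defensive.

Definition inI (d n : nat) (s : seq nat) : bool :=
  [&& size s == d, sorted ltn s & all (fun x => 0 < x <= n) s].

Fixpoint seqs (d n : nat) : seq (seq nat) :=
  match d with
  | 0 => [:: [::]]
  | d'.+1 => [seq x :: s | x <- iota 1 n, s <- seqs d' n]
  end.

Definition Idn (d n : nat) : seq (seq nat) := [seq s <- seqs d n | inI d n s].

(* Bruhat order: componentwise comparison. *)
Definition leI (a b : seq nat) : bool := all2 leq a b.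
Definition ltI (a b : seq nat) : bool := leI a b && (a != b).

Fixpoint lexle (s t : seq nat) : bool :=
  match s, t with
  | [::], _ => true
  | _ :: _, [::] => false
  | x :: s', y :: t' => (x < y) || ((x == y) && lexle s' t')
  end.
Definition lexlt (s t : seq nat) : bool := lexle s t && (s != t).

(* A chain is represented by the list [:: i_0; i_1; ...; i_r] with
   i_0 < i_1 < ... < i_r, so that nth [::] C t = i_t. *)
Definition is_maxchain (d n : nat) (C : seq (seq nat)) : Prop :=
  [/\ all (inI d n) C, sorted ltI C &
      forall x, inI d n x ->
        (forall y, y \in C -> leI x y || leI y x) -> x \in C].

Definition chain_string (C : seq (seq nat)) : seq nat := flatten (rev C).

Definition is_Cright (d n : nat) (Cr : seq (seq nat)) : Prop :=
  is_maxchain d n Cr /\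
  forall C, is_maxchain d n C -> lexle (chain_string Cr) (chain_string C).

Definition admissible (d n s h : nat) : bool :=
  [&& 0 < h, h <= d, h <= s & s < n - d + h].

(* Root operator f_{s,h} on I(d,n); None stands for 0.  Positions are
   1-based: i_h = nth 0 i h.-1. *)
Definition rootop (d s h : nat) (i : seq nat) : option (seq nat) :=
  if (nth 0 i h.-1 == s) && ((h == d) || (s.+2 <= nth 0 i h))
  then Some (set_nth 0 i h.-1 s.+1) else None.

Definition Fop (d n t : nat) (C : seq (seq nat)) : option (seq (seq nat)) :=
  let a := nth [::] C t.-1 in
  let c := nth [::] C t in
  let b := nth [::] C t.+1 in
  let J := [seq x <- Idn d n | leI a x && leI x b] in
  if [&& size J == 4, a \in J, c \in J & b \in J] then
    match [seq x <- J | x \notin [:: a; c; b]] with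
    | [:: c'] => if lexlt c c' then Some (set_nth [::] C t c') else None
    | _ => None
    end
  else None.

(* F_{t_1} F_{t_2} ... F_{t_k} (C), with F(0) = 0 (F_{t_k} applied first). *)
Definition Fseq (d n : nat) (ts : seq nat) (C : seq (seq nat)) :
  option (seq (seq nat)) :=
  foldr (fun t oC => obind (Fop d n t) oC) (Some C) ts.

Definition stransp (t x : nat) : nat :=
  if x == t then t.+1 else if x == t.+1 then t else x.

(* The permutation s_{t_k} s_{t_{k-1}} ... s_{t_1} (functional composition,
   s_{t_1} applied first) for ts = [:: t_1; ...; t_k]. *)
Definition sprod (ts : seq nat) (x : nat) : nat :=
  foldl (fun y t => stransp t y) x ts.

(* Main.v *)
Require Import Defs.
From mathcomp Require Import all_boot zify.
Set Implicit Arguments. Unset Strict Implicit.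

Lemma leIP a b : reflect (size a = size b /\ forall i, i < size a -> nth 0 a i <= nth 0 b i) (leI a b).
Proof.
rewrite /leI; apply: (iffP idP).
  elim: a b => [|x a IH] [|y b] //= /andP [Hxy /IH [Hs H]]; split; first by rewrite Hs.
  by case=> [|i] //= Hi; apply: H.
elim: a b => [|x a IH] [|y b] //=; first by case.
  by case.
case=> [[Hs] H]; apply/andP; split; first exact: (H 0).
by apply: IH; split => // i Hi; apply: (H i.+1).
Qed.
Lemma inIP d n x : reflect [/\ size x = d, (forall p, p.+1 < d -> nth 0 x p < nth 0 x p.+1) &
   (forall p, p < d -> 0 < nth 0 x p <= n)] (inI d n x).
Proof.
rewrite /inI; apply: (iffP and3P) => [[/eqP Hs /(sortedP 0) H1 /(all_nthP 0) H2]|[Hs H1 H2]].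
  by split => // p Hp; [apply: H1 | apply: H2]; rewrite Hs.
by split; [apply/eqP | apply/(sortedP 0) | apply/(all_nthP 0)] => // p; rewrite Hs; [apply: H1|apply: H2].
Qed.

Lemma inI_size d n x : inI d n x -> size x = d.
Proof. by case/inIP. Qed.

Lemma inI_step d n x p q : inI d n x -> p <= q -> q < d -> nth 0 x p + (q - p) <= nth 0 x q.
Proof.
case/inIP => _ H1 _ Hpq; elim: q Hpq => [|q IH]; first by rewrite leqn0 => /eqP ->; rewrite addn0.
rewrite leq_eqVlt => /orP [/eqP <- _|Hpq Hq]; first by rewrite subnn addn0.
have := IH Hpq (ltnW Hq); have := H1 q Hq; lia.
Qed.

Lemma inI_lo d n x p : inI d n x -> p < d -> p < nth 0 x p.
Proof.
move=> Hx Hp; have := inI_step Hx (leq0n p) Hp; case/inIP: Hx => _ _ H2.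
have := H2 0 (leq_ltn_trans (leq0n p) Hp); lia.
Qed.

Lemma inI_hi d n x p : inI d n x -> p < d -> nth 0 x p + (d - p.+1) <= n.
Proof.
move=> Hx Hp; have Hd: d.-1 < d by lia.
have := inI_step Hx (_ : p <= d.-1) Hd; case/inIP: Hx => _ _ H2.
have := H2 _ Hd; lia.
Qed.

Lemma rootopP d s h a b : rootop d s h a = Some b -> h.-1 < size a ->
  [/\ size b = size a, nth 0 a h.-1 = s, nth 0 b h.-1 = s.+1,
      (forall i, i != h.-1 -> nth 0 b i = nth 0 a i) & (h == d) || (s.+2 <= nth 0 a h)].
Proof.
rewrite /rootop; case: ifP => // /andP [/eqP Ha Hc] [<-] Hh.
rewrite size_set_nth nth_set_nth /= eqxx; split => //.
  by apply/maxn_idPr.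
by move=> i /negbTE Hi; rewrite nth_set_nth /= Hi.
Qed.

Lemma rootopI d s h a b : h.-1 < size a -> nth 0 a h.-1 = s -> (h == d) || (s.+2 <= nth 0 a h) ->
  size b = size a -> nth 0 b h.-1 = s.+1 -> (forall i, i != h.-1 -> nth 0 b i = nth 0 a i) ->
  rootop d s h a = Some b.
Proof.
move=> Hh Ha Hc Hs Hb Hi; rewrite /rootop Ha eqxx Hc /=; congr Some.
apply: (@eq_from_nth _ 0); first by rewrite size_set_nth Hs; apply/maxn_idPr.
move=> i _; rewrite nth_set_nth /=; case: eqP => [->|/eqP Hne]; first by rewrite Hb.
by rewrite Hi.
Qed.

Lemma cover_between d s h a b x : rootop d s h a = Some b -> h.-1 < size a ->
  leI a x -> leI x b -> x = a \/ x = b.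
Proof.
move=> /rootopP H Hh; case: (H Hh) => Hsb Ha Hb Hi _ /leIP [Hs1 H1] /leIP [Hs2 H2].
have Hx: forall i, i != h.-1 -> nth 0 x i = nth 0 a i.
  move=> i Hne; case: (ltnP i (size a)) => Hia.
    by have := H1 i Hia; have := H2 i (leq_trans Hia (eq_leq Hs1)); rewrite Hi //; lia.
  by rewrite !nth_default // -?Hs1.
have := H1 _ Hh; have := H2 h.-1 (leq_trans Hh (eq_leq Hs1)); rewrite Ha Hb => Hu Hl.
have [Ex|Ex]: nth 0 x h.-1 = s \/ nth 0 x h.-1 = s.+1 by lia.
  left; apply: (@eq_from_nth _ 0); first by rewrite -Hs1.
  by move=> i _; case: (eqVneq i h.-1) => [->|/Hx //]; rewrite Ex.
right; apply: (@eq_from_nth _ 0); first by rewrite -Hs1 Hsb.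
move=> i _; case: (eqVneq i h.-1) => [->|Hne]; first by rewrite Ex.
by rewrite Hx // Hi.
Qed.

Lemma label_uniq d s h s' h' a b : rootop d s h a = Some b -> rootop d s' h' a = Some b ->
  0 < h -> 0 < h' -> h.-1 < size a -> h'.-1 < size a -> s = s' /\ h = h'.
Proof.
move=> H H' Hh Hh' Hs Hs'; case: (rootopP H Hs) => _ Ha Hb Hi _; case: (rootopP H' Hs') => _ Ha' Hb' Hi' _.
case: (eqVneq h.-1 h'.-1) => [E|Hne].
  by split; [rewrite -Ha -Ha' E | lia].
by have := Hi' _ Hne; rewrite Hb Ha; lia.
Qed.

Lemma lex_first i s t : size s = size t -> i < size s -> (forall p, p < i -> nth 0 s p = nth 0 t p) ->
  nth 0 s i != nth 0 t i -> lexle s t = (nth 0 s i < nth 0 t i).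
Proof.
elim: i s t => [|i IH] [|x s] [|y t] //= [Hs] Hi Hp Hne.
  by rewrite (negbTE Hne) andFb orbF.
have Hxy := Hp 0 isT; rewrite /= in Hxy; rewrite Hxy ltnn eqxx /=.
by apply: IH => // p Hpi; apply: (Hp p.+1).
Qed.

Lemma lexle_refl s : lexle s s.
Proof. by elim: s => //= x s ->; rewrite eqxx orbT. Qed.

Lemma lexle_anti s t : lexle s t -> lexle t s -> s = t.
Proof.
elim: s t => [|x s IH] [|y t] //= /orP [H|/andP [/eqP E H]] /orP [H'|/andP [/eqP E' H']]; try lia.
by rewrite E (IH t).
Qed.

Lemma lexle_cat_same a u v : lexle (a ++ u) (a ++ v) = lexle u v.
Proof. by elim: a => //= x a ->; rewrite ltnn eqxx. Qed.

Lemma lexle_cat_diff a b u v : size a = size b -> a != b -> lexle (a ++ u) (b ++ v) = lexle a b.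
Proof.
elim: a b => [|x a IH] [|y b] //= [Hs] Hne.
case: (eqVneq x y) => [E|Hxy]; last by rewrite !andFb.
by rewrite IH //; move: Hne; rewrite E eqseq_cons eqxx.
Qed.

Lemma Fop_step d n t C C' s1 h1 s2 h2 :
  inI d n (nth [::] C t.-1) -> inI d n (nth [::] C t) -> inI d n (nth [::] C t.+1) ->
  0 < h1 <= d -> 0 < h2 <= d ->
  rootop d s1 h1 (nth [::] C t.-1) = Some (nth [::] C t) ->
  rootop d s2 h2 (nth [::] C t) = Some (nth [::] C t.+1) ->
  Fop d n t C = Some C' ->
  exists c', [/\ inI d n c', C' = set_nth [::] C t c', h2 < h1,
     rootop d s2 h2 (nth [::] C t.-1) = Some c' & rootop d s1 h1 c' = Some (nth [::] C t.+1)].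
Proof.
rewrite /Fop; set a := nth [::] C t.-1; set c := nth [::] C t; set b := nth [::] C t.+1.
move=> Ia Ic Ib Hh1 Hh2 R1 R2.
case: ifP => // _.
set L := filter _ _.
have HL: forall x, x \in L -> [/\ inI d n x, leI a x, leI x b & x \notin [:: a; c; b]].
  move=> x; rewrite mem_filter mem_filter /Idn mem_filter => /andP [Hn /andP [/andP [Hax Hxb] /andP [Hx _]]].
  by split.
case EL: L => [|c' [|? ?]] //.
case: ifP => // Hlex [<-].
have : c' \in L by rewrite EL mem_head.
case/HL => Ic' Hac' Hc'b Hnot.
have Sa := inI_size Ia; have Sc := inI_size Ic; have Sb := inI_size Ib; have Sc' := inI_size Ic'.
case/andP: Hh1 => Hh1 Hh1'; case/andP: Hh2 => Hh2 Hh2'.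
have Hk1 : h1.-1 < size a by rewrite Sa; lia.
have Hk2 : h2.-1 < size c by rewrite Sc; lia.
have [_ A1 C1 AC1 Cond1] := rootopP R1 Hk1.
have [_ C2 B2 CB2 Cond2] := rootopP R2 Hk2.
case/leIP: Hac' => _ L1; case/leIP: Hc'b => _ L2.
rewrite Sa in L1; rewrite Sc' in L2.
have Sx: forall x y, size x = d -> size y = d -> (forall i, i < d -> nth 0 x i = nth 0 y i) -> x = y.
  by move=> x y Hx Hy H; apply: (@eq_from_nth _ 0) => [|i]; rewrite ?Hx ?Hy // => /H.
rewrite !inE in Hnot.
case: (eqVneq h1.-1 h2.-1) => [Ek|Nk].
  have E: forall i, i < d -> i != h1.-1 -> nth 0 c' i = nth 0 a i.
    move=> i Hi Hne; have := L1 i Hi; have := L2 i Hi; rewrite CB2 -?Ek // AC1 //; lia.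
  rewrite -Ek in C2 B2 CB2.
  have Hk: h1.-1 < d by lia.
  have U := L1 _ Hk; have V := L2 _ Hk.
  have [Z|[Z|Z]]: nth 0 c' h1.-1 = s1 \/ nth 0 c' h1.-1 = s1.+1 \/ nth 0 c' h1.-1 = s1.+2 by lia.
  - case/negP: Hnot; apply/orP; left; apply/eqP; apply: Sx => // i Hi.
    by case: (eqVneq i h1.-1) => [->|Hne]; [rewrite Z A1 | exact: E].
  - case/negP: Hnot; apply/orP; right; apply/orP; left; apply/eqP; apply: Sx => // i Hi.
    by case: (eqVneq i h1.-1) => [->|Hne]; [rewrite Z C1 | rewrite E // AC1].
  - case/negP: Hnot; apply/orP; right; apply/orP; right; apply/eqP; apply: Sx => // i Hi.
    case: (eqVneq i h1.-1) => [->|Hne]; first by rewrite Z B2 -C2 C1.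
    by rewrite E // CB2 // AC1.
have Hk1d: h1.-1 < d by lia.
have Hk2d: h2.-1 < d by lia.
have E: forall i, i < d -> i != h1.-1 -> i != h2.-1 -> nth 0 c' i = nth 0 a i.
  move=> i Hi N1 N2; have := L1 i Hi; have := L2 i Hi; rewrite CB2 // AC1 //; lia.
have U1 := L1 _ Hk1d; have V1 := L2 _ Hk1d; have U2 := L1 _ Hk2d; have V2 := L2 _ Hk2d.
have Bk1: nth 0 b h1.-1 = s1.+1 by rewrite CB2 // C1.
have Ak2: nth 0 a h2.-1 = s2 by rewrite -AC1 1?eq_sym // C2.
have [Z2|Z2]: nth 0 c' h2.-1 = s2 \/ nth 0 c' h2.-1 = s2.+1 by move: U2 V2 Ak2 B2; clear; lia.
all: have [Z1|Z1]: nth 0 c' h1.-1 = s1 \/ nth 0 c' h1.-1 = s1.+1 by move: U1 V1 A1 Bk1; clear; lia.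
- case/negP: Hnot; apply/orP; left; apply/eqP; apply: Sx => // i Hi.
  case: (eqVneq i h1.-1) => [->|N1]; first by rewrite Z1 A1.
  case: (eqVneq i h2.-1) => [->|N2]; first by rewrite Z2 -C2 AC1 // eq_sym.
  exact: E.
- case/negP: Hnot; apply/orP; right; apply/orP; left; apply/eqP; apply: Sx => // i Hi.
  case: (eqVneq i h1.-1) => [->|N1]; first by rewrite Z1 C1.
  case: (eqVneq i h2.-1) => [->|N2]; first by rewrite Z2 C2.
  by rewrite E // AC1.
- have E': forall i, i != h2.-1 -> nth 0 c' i = nth 0 a i.
    move=> i N2; case: (ltnP i d) => Hi; last by rewrite !nth_default ?Sa ?Sc'.
    case: (eqVneq i h1.-1) => [->|N1]; first by rewrite Z1 A1.
    exact: E.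
  have E'': forall i, i != h1.-1 -> nth 0 c' i = nth 0 b i.
    move=> i N1; case: (ltnP i d) => Hi; last by rewrite !nth_default ?Sb ?Sc'.
    case: (eqVneq i h2.-1) => [->|N2]; first by rewrite Z2 B2.
    by rewrite E // CB2 // AC1.
  have Hlt: h2 < h1.
    case: (ltngtP h2 h1) => // [Hl|He]; last by move: Nk; rewrite He eqxx.
    move: Hlex; rewrite /lexlt => /andP [Hle _].
    have Hf : lexle c c' = (nth 0 c h1.-1 < nth 0 c' h1.-1).
      apply: lex_first; rewrite ?Sc ?Sc' //.
        move=> p Hp; rewrite AC1 ?E' //; apply/eqP; lia.
      by rewrite C1 Z1; apply/eqP; lia.
    by move: Hle; rewrite Hf C1 Z1; lia.
  case/inIP: (Ic') => _ Hinc _.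
  case/inIP: (Ib) => _ Hinb _.
  exists c'; split => //.
    apply: rootopI => //; first by rewrite Sa.
        case: (eqVneq h2 d) => [->//|Nd]; apply/orP; right.
        rewrite -E'; last by apply/eqP; lia.
        have := Hinc h2.-1; rewrite Z2 prednK //; lia.
      by rewrite Sa Sc'.
  apply: rootopI => //; first by rewrite Sc'.
        case: (eqVneq h1 d) => [->//|Nd]; apply/orP; right.
        rewrite E''; last by apply/eqP; lia.
        have := Hinb h1.-1; rewrite Bk1 prednK //; lia.
      by rewrite Sb Sc'.
    by move=> i Hi; rewrite E''.
- case/negP: Hnot; apply/orP; right; apply/orP; right; apply/eqP; apply: Sx => // i Hi.
  case: (eqVneq i h1.-1) => [->|N1]; first by rewrite Z1 CB2 // C1.
  case: (eqVneq i h2.-1) => [->|N2]; first by rewrite Z2 B2.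
  by rewrite E // CB2 // AC1.
Qed.

Definition Ef (d N j : nat) : seq nat := mkseq (fun p => p.+1 + minn N (j - (d - p.+1) * N)) d.

Lemma size_Ef d N j : size (Ef d N j) = d.
Proof. by rewrite size_mkseq. Qed.

Lemma nth_Ef d N j p : p < d -> nth 0 (Ef d N j) p = p.+1 + minn N (j - (d - p.+1) * N).
Proof. by move=> Hp; rewrite nth_mkseq. Qed.

Lemma mulN_le a b N : a <= b -> a * N <= b * N.
Proof. by move=> H; rewrite leq_mul2r H orbT. Qed.

Lemma Ef_inI d n j : d <= n -> inI d n (Ef d (n - d) j).
Proof.
move=> Hdn; apply/inIP; split; first exact: size_Ef.
  move=> p Hp; rewrite !nth_Ef //; last by lia.
  have H1: (d - p.+2).+1 = d - p.+1 by lia.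
  have := mulN_le (n - d) (leqnSn (d - p.+2)); rewrite H1 => H2.
  lia.
move=> p Hp; rewrite nth_Ef //; lia.
Qed.

Lemma Ef_decomp d N j : 0 < N -> 0 < j <= d * N ->
  exists q k, [/\ 0 < q <= d, k < N & j.-1 = (d - q) * N + k].
Proof.
move=> HN Hj; exists (d - j.-1 %/ N), (j.-1 %% N); split; last first.
- have Hlt: j.-1 %/ N < d by rewrite ltn_divLR //; lia.
  by rewrite subKn ?(ltnW Hlt) // -divn_eq.
- by rewrite ltn_mod.
have Hlt: j.-1 %/ N < d by rewrite ltn_divLR //; lia.
move: Hlt; generalize (j.-1 %/ N) => m; lia.
Qed.

Lemma Ef_vals d N q k p j : 0 < q <= d -> k < N -> j = (d - q) * N + k -> p < d ->
  [/\ q < p.+1 -> minn N (j - (d - p.+1) * N) = N /\ minn N (j.+1 - (d - p.+1) * N) = N,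
      p.+1 < q -> minn N (j - (d - p.+1) * N) = 0 /\ minn N (j.+1 - (d - p.+1) * N) = 0 &
      p.+1 = q -> minn N (j - (d - p.+1) * N) = k /\ minn N (j.+1 - (d - p.+1) * N) = k.+1].
Proof.
move=> Hq Hk Hj Hp; split => Hpq.
- have H1 : (d - p.+1).+1 <= d - q by lia.
  have := mulN_le N H1; rewrite mulSn => H2; lia.
- have H1 : (d - q).+1 <= d - p.+1 by lia.
  have := mulN_le N H1; rewrite mulSn => H2; lia.
- by rewrite Hpq Hj; lia.
Qed.

Lemma Ef_edge d n j q k : d < n -> 0 < q <= d -> k < n - d -> j = (d - q) * (n - d) + k ->
  admissible d n (q + k) q /\ rootop d (q + k) q (Ef d (n - d) j) = Some (Ef d (n - d) j.+1).
Proof.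
move=> Hdn Hq Hk Hj; split; first by rewrite /admissible; lia.
have Hq1: q.-1 < d by lia.
have [A1 A2 A3] := Ef_vals Hq Hk Hj Hq1.
have Hq0 : q.-1.+1 = q by lia.
have [A31 A32] := A3 Hq0.
apply: rootopI; rewrite ?size_Ef //.
- by rewrite nth_Ef // A31; lia.
- case: (eqVneq q d) => [->//|Nd]; apply/orP; right.
  have Hqd: q < d by lia.
  rewrite nth_Ef //.
  have [B1 _ _] := Ef_vals Hq Hk Hj Hqd.
  case: B1; lia.
- by rewrite nth_Ef // A32; lia.
move=> i Hi; case: (ltnP i d) => Hid; last by rewrite !nth_default ?size_Ef.
have [B1 B2 _] := Ef_vals Hq Hk Hj Hid.
rewrite !nth_Ef //; case: (ltngtP q i.+1) => H.
- by case: (B1 H) => -> ->.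
- by case: (B2 H) => -> ->.
- by move: Hi; rewrite H eqxx.
Qed.

Lemma leI_refl a : leI a a.
Proof. by apply/leIP; split. Qed.

Lemma leI_trans a b c : leI a b -> leI b c -> leI a c.
Proof.
move=> /leIP [S1 H1] /leIP [S2 H2]; apply/leIP; split; first by rewrite S1.
by move=> i Hi; apply: leq_trans (H1 i Hi) (H2 i _); rewrite -S1.
Qed.

Lemma leI_anti a b : leI a b -> leI b a -> a = b.
Proof.
move=> /leIP [S1 H1] /leIP [S2 H2]; apply: (@eq_from_nth _ 0) => // i Hi.
by apply/eqP; rewrite eqn_leq H1 // H2 // -S1.
Qed.

Lemma ltI_trans : transitive ltI.
Proof.
move=> b a c /andP [H1 N1] /andP [H2 N2]; apply/andP; split; first exact: leI_trans H1 H2.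
apply/eqP => E; subst c; move/eqP: N1; apply; exact: leI_anti.
Qed.

Lemma rootop_le d s h a b : rootop d s h a = Some b -> h.-1 < size a -> ltI a b.
Proof.
move=> R Hh; have [Sb Ha Hb Hi _] := rootopP R Hh; apply/andP; split.
  apply/leIP; split => // i _; case: (eqVneq i h.-1) => [->|N]; [rewrite Ha Hb // | by rewrite Hi].
apply/eqP => E; move: Hb; rewrite -E Ha; lia.
Qed.

Definition bot d := Ef d 0 0.

Lemma Ef0 d N : Ef d N 0 = Ef d 0 0.
Proof. by apply: (@eq_from_nth _ 0) => [|p]; rewrite !size_Ef // => Hp; rewrite !nth_Ef //; lia. Qed.

Lemma bot_le d n x : inI d n x -> leI (Ef d (n - d) 0) x.
Proof.
move=> Hx; apply/leIP; rewrite size_Ef (inI_size Hx); split => // p Hp.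
rewrite nth_Ef //; have := inI_lo Hx Hp; lia.
Qed.

Lemma top_ge d n x : d <= n -> inI d n x -> leI x (Ef d (n - d) (d * (n - d))).
Proof.
move=> Hdn Hx; apply/leIP; rewrite size_Ef (inI_size Hx); split => // p Hp.
rewrite nth_Ef //.
have H1 : (d - p.+1) * (n - d) + (n - d) <= d * (n - d).
  rewrite addnC -mulSn; apply: mulN_le; lia.
have := inI_hi Hx Hp; lia.
Qed.

Definition Elist d n := mkseq (Ef d (n - d)) (d * (n - d)).+1.

Lemma nth_Elist d n j : j <= d * (n - d) -> nth [::] (Elist d n) j = Ef d (n - d) j.
Proof. by move=> Hj; rewrite nth_mkseq. Qed.

Lemma size_Elist d n : size (Elist d n) = (d * (n - d)).+1.
Proof. by rewrite size_mkseq. Qed.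

Lemma mem_Elist d n j : j <= d * (n - d) -> Ef d (n - d) j \in Elist d n.
Proof. by move=> Hj; apply/mapP; exists j; rewrite // mem_iota. Qed.

Lemma Elist_edge d n j : 0 < d -> d < n -> 0 < j <= d * (n - d) ->
  exists q k, [/\ 0 < q <= d, k < n - d, j.-1 = (d - q) * (n - d) + k,
     admissible d n (q + k) q & rootop d (q + k) q (Ef d (n - d) j.-1) = Some (Ef d (n - d) j)].
Proof.
move=> Hd Hdn Hj; have HN : 0 < n - d by lia.
have [q [k [Hq Hk Ej]]] := Ef_decomp HN Hj.
exists q, k; have [A R] := Ef_edge Hdn Hq Hk Ej; split => //.
have Hj0 : 0 < j by case/andP: Hj.
by rewrite -{2}(prednK Hj0).
Qed.

Lemma Ef_lt d n i j : 0 < d -> d < n -> i < j <= d * (n - d) -> ltI (Ef d (n - d) i) (Ef d (n - d) j).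
Proof.
move=> Hd Hdn; elim: j => [|j IH] //= Hij.
have Hj1 : 0 < j.+1 <= d * (n - d) by lia.
have [q [k [Hq Hk Ej A R]]] := Elist_edge Hd Hdn Hj1.
have Hq1 : q.-1 < size (Ef d (n - d) j.+1.-1) by rewrite size_Ef; lia.
have L := rootop_le R Hq1.
case: (eqVneq i j) => [->//|N].
by apply: ltI_trans (IH _) L; lia.
Qed.

Lemma Elist_maxchain d n : 0 < d -> d < n -> is_maxchain d n (Elist d n).
Proof.
move=> Hd Hdn; split.
- by apply/allP => x /mapP [j _ ->]; apply: Ef_inI; lia.
- apply/(sortedP [::]) => i; rewrite size_Elist => Hi; rewrite !nth_Elist; try lia.
  by apply: Ef_lt => //; lia.
move=> x Hx Hc.
pose P j := (j <= d * (n - d)) && leI (Ef d (n - d) j) x.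
have exP : exists j, P j by exists 0; rewrite /P leq0n bot_le.
have ubP : forall j, P j -> j <= d * (n - d) by move=> j /andP [].
case: (ex_maxnP exP ubP) => j /andP [Hj Hle] Hmax.
case: (ltnP j (d * (n - d))) => Hjr; last first.
  have Ej : j = d * (n - d) by apply/eqP; rewrite eqn_leq Hj.
  rewrite (@leI_anti x (Ef d (n - d) j)); first exact: mem_Elist.
    by rewrite Ej; apply: top_ge => //; lia.
  exact: Hle.
have := Hc _ (mem_Elist Hjr) => /orP [H|H]; last first.
  by have := Hmax j.+1; rewrite /P Hjr H => /(_ isT); rewrite ltnn.
have Hj1 : 0 < j.+1 <= d * (n - d) by lia.
have [q [k [Hq Hk Ej A R]]] := Elist_edge Hd Hdn Hj1.
have Hq1 : q.-1 < size (Ef d (n - d) j.+1.-1) by rewrite size_Ef; lia.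
case: (cover_between R Hq1 Hle H) => ->; apply: mem_Elist; lia.
Qed.

Lemma mc_inI d n M i : is_maxchain d n M -> i < size M -> inI d n (nth [::] M i).
Proof. by case=> H _ _ Hi; apply: (all_nthP [::] H). Qed.

Lemma mc_lt d n M i j : is_maxchain d n M -> i < j -> j < size M -> ltI (nth [::] M i) (nth [::] M j).
Proof.
case=> _ S _ Hij Hj; apply: (sorted_ltn_nth ltI_trans [::] S) => //; rewrite inE //.
exact: ltn_trans Hij Hj.
Qed.

Lemma mc_le d n M i j : is_maxchain d n M -> i <= j -> j < size M -> leI (nth [::] M i) (nth [::] M j).
Proof.
move=> H; rewrite leq_eqVlt => /orP [/eqP ->|Hij] Hj; first exact: leI_refl.
by case/andP: (mc_lt H Hij Hj).
Qed.

Lemma mc_index (M : seq (seq nat)) x : x \in M -> exists2 i, i < size M & nth [::] M i = x.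
Proof. by move=> Hx; exists (index x M); [rewrite index_mem | apply: nth_index]. Qed.

Lemma mc_bot d n M : 0 < d -> d < n -> is_maxchain d n M ->
  0 < size M /\ nth [::] M 0 = Ef d (n - d) 0.
Proof.
move=> Hd Hdn H; have Hin : Ef d (n - d) 0 \in M.
  case: H => HA _ HM; apply: HM; first by apply: Ef_inI; lia.
  by move=> y Hy; rewrite bot_le // (allP HA).
have [i Hi Ei] := mc_index Hin; have H0 : 0 < size M by lia.
split => //; apply: leI_anti; last by apply: bot_le; exact: mc_inI H H0.
by rewrite -Ei; exact: mc_le H (leq0n i) Hi.
Qed.

Lemma mc_top d n M : 0 < d -> d < n -> is_maxchain d n M ->
  nth [::] M (size M).-1 = Ef d (n - d) (d * (n - d)).
Proof.
move=> Hd Hdn H; have Hin : Ef d (n - d) (d * (n - d)) \in M.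
  case: H => HA _ HM; apply: HM; first by apply: Ef_inI; lia.
  by move=> y Hy; rewrite top_ge ?orbT //; [lia | rewrite (allP HA)].
have [i Hi Ei] := mc_index Hin; have H0 : (size M).-1 < size M by lia.
apply: leI_anti; first by apply: top_ge; [lia | exact: mc_inI H H0].
by rewrite -Ei; apply: mc_le H _ H0; lia.
Qed.

Lemma mc_edge d n M i : 0 < d -> d < n -> is_maxchain d n M -> 0 < i < size M ->
  exists s h, admissible d n s h /\ rootop d s h (nth [::] M i.-1) = Some (nth [::] M i).
Proof.
move=> Hd Hdn H /andP [Hi0 Hi].
set a := nth [::] M i.-1; set b := nth [::] M i.
have Hi1 : i.-1 < i by lia.
have Ia : inI d n a by apply: mc_inI H _; lia.
have Ib : inI d n b by apply: mc_inI H _; lia.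
have /andP [Hab Nab] := mc_lt H Hi1 Hi.
case/leIP: (Hab) => Sab Lab.
have Sa := inI_size Ia; have Sb := inI_size Ib.
pose P p := (p < d) && (nth 0 a p < nth 0 b p).
have exP : exists p, P p.
  case: (boolP (has (fun p => nth 0 a p < nth 0 b p) (iota 0 d))) => [/hasP [p Hp Hlt]|Hn].
    by exists p; rewrite /P Hlt andbT; rewrite mem_iota in Hp; lia.
  case/eqP: Nab; apply: (@eq_from_nth _ 0); first by rewrite Sa Sb.
  move=> p Hp; rewrite Sa in Hp; apply/eqP; rewrite eqn_leq Lab ?Sa //=.
  by move/hasPn: Hn => /(_ p); rewrite mem_iota leq0n add0n Hp ltnNge => /(_ isT) /negbNE.
have ubP : forall p, P p -> p <= d by move=> p /andP [Hp _]; lia.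
case: (ex_maxnP exP ubP) => p /andP [Hpd Hpab] Hmax.
have Eq : forall q, p < q -> q < d -> nth 0 a q = nth 0 b q.
  move=> q Hpq Hqd; apply/eqP; rewrite eqn_leq Lab ?Sa //=; rewrite leqNgt.
  by apply/negP => Hlt; have := Hmax q; rewrite /P Hqd Hlt => /(_ isT); lia.
set x := set_nth 0 a p (nth 0 a p).+1.
have Sx : size x = d by rewrite size_set_nth Sa; apply/maxn_idPr.
have Nx : forall i, nth 0 x i = if i == p then (nth 0 a p).+1 else nth 0 a i.
  by move=> j; rewrite nth_set_nth.
have [_ Ca Ra] := inIP _ _ _ Ia; have [_ Cb Rb] := inIP _ _ _ Ib.
have Ix : inI d n x.
  apply/inIP; split => //.
    move=> q Hq; rewrite !Nx; case: (eqVneq q p) => [Eqp|Nq].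
      subst q; have Np : p.+1 != p by lia.
      rewrite (negbTE Np) (Eq p.+1) //.
      have Hpa : p < size (nth [::] M i.-1) by rewrite -/a Sa.
      by have := Cb p Hq; have := Lab p Hpa; lia.
    case: (eqVneq q.+1 p) => [Eqp|Nq1]; last exact: Ca.
    by rewrite -Eqp; have := Ca q Hq; lia.
  move=> q Hq; rewrite Nx; case: (eqVneq q p) => [Eqp|Nq]; last exact: Ra.
  subst q.
  have Hpa : p < size (nth [::] M i.-1) by rewrite -/a Sa.
  by have := Rb p Hpd; have := Lab p Hpa; lia.
have Hax : leI a x.
  apply/leIP; split; first by rewrite Sa Sx.
  by move=> q _; rewrite Nx; case: (eqVneq q p) => [->|]; lia.
have Hxb : leI x b.
  apply/leIP; split; first by rewrite Sb Sx.
  move=> q Hq; rewrite Nx; case: (eqVneq q p) => [->//|_]; apply: Lab; by rewrite -/a Sa -Sx.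
have Hxin : x \in M.
  case: (H) => HA HS HM; apply: HM => // y /mc_index [k Hk <-].
  case: (ltnP k i) => Hki.
    apply/orP; right; apply: leI_trans _ Hax; apply: mc_le H _ _; lia.
  apply/orP; left; apply: leI_trans Hxb _; exact: mc_le H Hki Hk.
have [k Hk Ek] := mc_index Hxin.
have Exb : x = b.
  case: (ltnP k i) => Hki.
    have : leI x a by rewrite -Ek; apply: mc_le H _ _; lia.
    move/leIP => [_ L]; have := L p; rewrite Sx Nx eqxx => /(_ Hpd); lia.
  apply: leI_anti => //; rewrite -Ek; exact: mc_le H Hki Hk.
exists (nth 0 a p), p.+1; split.
  rewrite /admissible; have := inI_lo Ia Hpd; have := inI_hi Ib Hpd; lia.
rewrite -Exb; apply: rootopI => //=; rewrite ?Sa ?Sx ?Nx ?eqxx //.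
  case: (eqVneq p.+1 d) => [->//|Nd]; apply/orP; right.
  have Hp1 : p.+1 < d by lia.
  rewrite (Eq p.+1) //.
  by have := Cb p Hp1; lia.
by move=> j Hj; rewrite Nx (negbTE Hj).
Qed.

Lemma lexmin_aux d n M j : 0 < d -> d < n -> is_maxchain d n M -> j <= d * (n - d) ->
  forall i, i < size M -> nth [::] M i = Ef d (n - d) j ->
  lexle (flatten (rev (mkseq (Ef d (n - d)) j.+1))) (flatten (rev (take i.+1 M))).
Proof.
move=> Hd Hdn H; have [HM0 HM0E] := mc_bot Hd Hdn H.
elim: j => [|j IH] Hj i Hi Ei.
  have Hi0 : i = 0.
    case: i Hi Ei => // i Hi Ei; have := mc_lt H (ltn0Sn i) Hi.
    by rewrite HM0E Ei /ltI eqxx andbF.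
  subst i; rewrite (take_nth [::]) // take0 /= HM0E /=; exact: lexle_refl.
have Hi0 : 0 < i.
  case: i Hi Ei => // _; rewrite HM0E => E.
  have := @Ef_lt d n 0 j.+1 Hd Hdn; rewrite E /ltI eqxx andbF; apply; lia.
rewrite mkseqS (take_nth [::]) // !rev_rcons /= Ei lexle_cat_same.
case: i Hi Ei Hi0 => // i Hi Ei _.
have Hj1 : 0 < j.+1 <= d * (n - d) by lia.
have [q [k [Hq Hk Ej A R]]] := Elist_edge Hd Hdn Hj1.
have Hii : 0 < i.+1 < size M by lia.
have [s [h [Ah Rh]]] := mc_edge Hd Hdn H Hii.
rewrite /= in Ej R Rh; rewrite Ei in Rh.
set y := nth [::] M i.
have Iy : inI d n y by apply: mc_inI H _; lia.
have Sy := inI_size Iy.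
have Hh : h.-1 < size y by rewrite Sy; case/andP: Ah; lia.
have Hq1 : q.-1 < size (Ef d (n - d) j) by rewrite size_Ef; lia.
have [_ Yh Eh Yo _] := rootopP Rh Hh.
have [_ Fq Gq Fo _] := rootopP R Hq1.
case: (eqVneq h q) => [Ehq|Nhq].
  subst h.
  have Ey : y = Ef d (n - d) j.
    apply: (@eq_from_nth _ 0); first by rewrite Sy size_Ef.
    move=> p _; case: (eqVneq p q.-1) => [->|Np]; first by rewrite Yh Fq; move: Eh; rewrite Gq; lia.
    by rewrite -Yo // -Fo.
  apply: IH => //; lia.
have Nq : q.-1 != h.-1 by apply/eqP; case/andP: Ah; lia.
rewrite mkseqS (take_nth [::]) ?(ltnW Hi) // !rev_rcons /= -/y.
rewrite lexle_cat_diff ?Sy ?size_Ef //; last first.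
  apply/eqP => E; move: (Yo _ Nq); rewrite -[nth [::] M i]/y -E Fq Gq; lia.
rewrite (@lex_first q.-1) ?size_Ef ?Sy //.
- by rewrite /y Fq -(Yo _ Nq) Gq.
- lia.
- move=> p Hp; rewrite /y.
  have Hpd : p < d by lia.
  have [_ B2 _] := Ef_vals Hq Hk Ej Hpd.
  have Hpq : p.+1 < q by lia.
  have [B2a B2b] := B2 Hpq.
  rewrite nth_Ef // B2a.
  case: (eqVneq p h.-1) => [Ep|Np].
    have := inI_lo Iy Hpd; rewrite /y Ep Yh.
    move: Eh; rewrite nth_Ef; last by case/andP: Ah; lia.
    rewrite -Ep B2b; lia.
  by rewrite -Yo // nth_Ef // B2b.
- by rewrite /y Fq -(Yo _ Nq) Gq; apply/eqP; lia.
Qed.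

Lemma lexmin d n M : 0 < d -> d < n -> is_maxchain d n M ->
  lexle (chain_string (Elist d n)) (chain_string M).
Proof.
move=> Hd Hdn H; have [HM0 _] := mc_bot Hd Hdn H.
have := @lexmin_aux d n M (d * (n - d)) Hd Hdn H (leqnn _) (size M).-1.
rewrite prednK // take_size; apply; first by lia.
exact: mc_top.
Qed.

Lemma flatten_inj d (s t : seq (seq nat)) : 0 < d -> all (fun x => size x == d) s ->
  all (fun x => size x == d) t -> flatten s = flatten t -> s = t.
Proof.
move=> Hd; elim: s t => [|x s IH] [|y t] //=.
- by move=> _ /andP [/eqP Hy _] E; move: (congr1 size E); rewrite size_cat Hy /=; lia.
- by move=> /andP [/eqP Hx _] _ E; move: (congr1 size E); rewrite size_cat Hx /=; lia.
move=> /andP [/eqP Hx Hs] /andP [/eqP Hy Ht] E.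
have Exy : x = y.
  by move: (congr1 (take d) E); rewrite !take_size_cat.
by rewrite Exy (IH t) //; move: (congr1 (drop d) E); rewrite !drop_size_cat.
Qed.

Lemma Cr_eq d n Cr : 0 < d -> d < n -> is_Cright d n Cr -> Cr = Elist d n.
Proof.
move=> Hd Hdn [HC Hmin].
have HE := Elist_maxchain Hd Hdn.
have E1 := Hmin _ HE; have E2 := lexmin Hd Hdn HC.
have := lexle_anti E1 E2; rewrite /chain_string => /flatten_inj.
have Hall : forall M, is_maxchain d n M -> all (fun x => size x == d) (rev M).
  by move=> M [HA _ _]; rewrite all_rev; apply/allP => x /(allP HA) /inI_size ->.
by move=> /(_ _ Hd (Hall _ HC) (Hall _ HE)) /(congr1 rev); rewrite !revK.
Qed.

Definition ninv (r : nat) (f : nat -> nat) : nat :=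
  \sum_(p <- iota 1 r) \sum_(q <- iota 1 r) ((p < q) && (f q < f p)).

Lemma stransp_inv u x : stransp u (stransp u x) = x.
Proof.
rewrite /stransp; case: (eqVneq x u) => [->|N1]; first by rewrite eqxx (negbTE (_ : u.+1 != u)) ?eqxx //; lia.
case: (eqVneq x u.+1) => [->|N2]; first by rewrite eqxx.
by rewrite (negbTE N1) (negbTE N2).
Qed.

Lemma sum_ind (s : seq nat) a X : a \in s -> uniq s -> \sum_(i <- s) (i == a) * X i = X a.
Proof.
move=> Ha Hu; rewrite (bigD1_seq a) //= eqxx mul1n big1 ?addn0 //.
by move=> i /negbTE ->.
Qed.

Lemma big_stransp r u F : 0 < u -> u < r ->
  \sum_(p <- iota 1 r) F (stransp u p) = \sum_(p <- iota 1 r) F p.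
Proof.
move=> Hu Hr; rewrite -(big_map (stransp u) xpredT F); apply: perm_big.
apply: uniq_perm; first by rewrite map_inj_uniq ?iota_uniq //; apply: (can_inj (stransp_inv u)).
  exact: iota_uniq.
move=> x; apply/mapP/idP => [[y Hy ->]|Hx].
  move: Hy; rewrite !mem_iota /stransp; case: eqP => H1; [|case: eqP => H2]; lia.
exists (stransp u x); last by rewrite stransp_inv.
move: Hx; rewrite !mem_iota /stransp; case: eqP => H1; [|case: eqP => H2]; lia.
Qed.

Lemma st_lt u p q : ~~ ((p == u) && (q == u.+1)) -> ~~ ((p == u.+1) && (q == u)) ->
  (stransp u p < stransp u q) = (p < q).
Proof.
rewrite /stransp; case: (eqVneq p u) => [->|Np]; case: (eqVneq q u) => [->|Nq];
  case: (eqVneq p u.+1) => [Ep|Np1]; case: (eqVneq q u.+1) => [Eq|Nq1]; rewrite ?eqxx //=; try lia.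
Qed.

Lemma ninv_step r f u : 0 < u -> u < r ->
  ninv r (fun x => f (stransp u x)) + (f u.+1 < f u) = ninv r f + (f u < f u.+1).
Proof.
move=> Hu Hr; rewrite /ninv.
have E1 : \sum_(p <- iota 1 r) \sum_(q <- iota 1 r) ((p < q) && (f (stransp u q) < f (stransp u p)))
   = \sum_(p <- iota 1 r) \sum_(q <- iota 1 r) ((stransp u p < stransp u q) && (f q < f p)).
  rewrite -(big_stransp _ Hu Hr); apply: eq_bigr => p _.
  rewrite -(big_stransp _ Hu Hr); apply: eq_bigr => q _.
  by rewrite !stransp_inv.
have Hm1 : u \in iota 1 r by rewrite mem_iota; lia.
have Hm2 : u.+1 \in iota 1 r by rewrite mem_iota; lia.
have Hq : forall (a b : nat) c, a \in iota 1 r -> b \in iota 1 r ->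
   \sum_(p <- iota 1 r) \sum_(q <- iota 1 r) ((p == a) * ((q == b) * c)) = c.
  move=> a b c Ha Hb.
  transitivity (\sum_(p <- iota 1 r) (p == a) * (fun _ => c) p); last exact: sum_ind (iota_uniq _ _).
  apply: eq_bigr => p _; rewrite -big_distrr /=; congr (_ * _).
  exact: (sum_ind (fun _ => c) Hb (iota_uniq _ _)).
rewrite E1.
rewrite -(Hq u u.+1 (f u.+1 < f u) Hm1 Hm2) -(Hq u.+1 u (f u < f u.+1) Hm2 Hm1).
rewrite -!big_split /=; apply: eq_bigr => p _; rewrite -!big_split /=; apply: eq_bigr => q _.
case: (boolP ((p == u) && (q == u.+1))) => [/andP [/eqP -> /eqP ->]|N1].
  rewrite /stransp eqxx (negbTE (_ : u.+1 != u)) ?eqxx ?ltnn ?leqnn //=; last by lia.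
  have -> : (u.+1 < u) = false by lia.
  have -> : (u == u.+1) = false by lia.
  by rewrite /= !mul1n !mul0n addn0.
case: (boolP ((p == u.+1) && (q == u))) => [/andP [/eqP -> /eqP ->]|N2].
  rewrite /stransp eqxx (negbTE (_ : u.+1 != u)) ?eqxx ?ltnn ?leqnn //=; last by lia.
  have -> : (u.+1 < u) = false by lia.
  by rewrite /= !mul1n !mul0n addn0.
rewrite st_lt //.
move: N1 N2; case: (p == u); case: (q == u.+1); case: (p == u.+1); case: (q == u) => //= _ _; by rewrite !muln0 !mul0n.
Qed.

Lemma ninv_id r : ninv r id = 0.
Proof. by rewrite /ninv big1 // => p _; rewrite big1 // => q _; case: ltngtP. Qed.

Lemma ninv_ext r f g : (forall x, 0 < x <= r -> f x = g x) -> ninv r f = ninv r g.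
Proof.
move=> H; rewrite /ninv; apply: eq_big_seq => p; rewrite mem_iota => Hp.
apply: eq_big_seq => q; rewrite mem_iota => Hq; rewrite !H //; lia.
Qed.

Lemma ninv_le r us : all (fun u => 0 < u < r) us -> ninv r (sprod us) <= size us.
Proof.
elim: us => [|u us IH] /=; first by rewrite (@ninv_ext r _ id) ?ninv_id.
case/andP => /andP [Hu Hr] Hus.
have := ninv_step (sprod us) Hu Hr; have := IH Hus.
rewrite /sprod /=; lia.
Qed.

Definition Rinv d n (Cr : seq (seq nat)) (sg : nat -> nat) (C : seq (seq nat)) :=
  [/\ size C = (d * (n - d)).+1, all (inI d n) C &
   forall t, 0 < t <= d * (n - d) -> 0 < sg t <= d * (n - d) /\
     exists s h, [/\ admissible d n s h,
       rootop d s h (nth [::] Cr (sg t).-1) = Some (nth [::] Cr (sg t)) &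
       rootop d s h (nth [::] C t.-1) = Some (nth [::] C t)]].

Lemma label_pos d n j s h : 0 < d -> d < n -> 0 < j <= d * (n - d) -> admissible d n s h ->
  rootop d s h (Ef d (n - d) j.-1) = Some (Ef d (n - d) j) ->
  exists k, k < n - d /\ j.-1 = (d - h) * (n - d) + k.
Proof.
move=> Hd Hdn Hj Ah R.
have [q [k [Hq Hk Ej A R']]] := Elist_edge Hd Hdn Hj.
have Hh : h.-1 < size (Ef d (n - d) j.-1) by rewrite size_Ef; case/andP: Ah; lia.
have Hq' : q.-1 < size (Ef d (n - d) j.-1) by rewrite size_Ef; lia.
have Hh0 : 0 < h by case/andP: Ah.
have Hq0 : 0 < q by case/andP: Hq.
have [_ Ehq] := label_uniq R R' Hh0 Hq0 Hh Hq'.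
by exists k; rewrite Ehq.
Qed.
Lemma chain_ind d n Cr : 0 < d -> d < n -> Cr = Elist d n ->
  forall ts C, all (fun t => 0 < t < d * (n - d)) ts -> Fseq d n ts Cr = Some C ->
  Rinv d n Cr (sprod ts) C /\ ninv (d * (n - d)) (sprod ts) = size ts.
Proof.
move=> Hd Hdn ECr; elim => [|t ts IH] C /=.
  move=> _ [<-]; split; last by rewrite (@ninv_ext _ _ id) ?ninv_id.
  have [HA _ _] := Elist_maxchain Hd Hdn.
  rewrite ECr; split => //; first exact: size_Elist.
  move=> j Hj; split => //; rewrite /sprod /=.
  have [q [k [Hq Hk Ej A R]]] := Elist_edge Hd Hdn Hj.
  exists (q + k), q; rewrite !nth_Elist //; lia.
case/andP => /andP [Ht0 Htr] Hts.
case E0: (Fseq d n ts Cr) => [C0|] //= HF.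
have [[HS HA HE] Hinv] := IH C0 Hts E0.
set r := d * (n - d) in HS HE Hinv Htr Hts *.
have Ht1 : 0 < t <= r by lia.
have Ht2 : 0 < t.+1 <= r by lia.
have [Hs1 [s1 [h1 [A1 Rc1 R1]]]] := HE t Ht1.
have [Hs2 [s2 [h2 [A2 Rc2 R2]]]] := HE t.+1 Ht2.
have Inth : forall i, i < size C0 -> inI d n (nth [::] C0 i) by move=> i; apply: (all_nthP [::] HA).
have Hh1 : 0 < h1 <= d by case/andP: A1 => -> /andP [-> _].
have Hh2 : 0 < h2 <= d by case/andP: A2 => -> /andP [-> _].
rewrite /= in R2.
have I0 : inI d n (nth [::] C0 t.-1) by apply: Inth; lia.
have I1 : inI d n (nth [::] C0 t) by apply: Inth; lia.
have I2 : inI d n (nth [::] C0 t.+1) by apply: Inth; lia.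
have [c' [Ic' EC Hlt R1' R2']] := Fop_step I0 I1 I2 Hh1 Hh2 R1 R2 HF.
have Hsg : sprod ts t < sprod ts t.+1.
  rewrite ECr !nth_Elist in Rc1 Rc2; try lia.
  have [k1 [Hk1 E1]] := label_pos Hd Hdn Hs1 A1 Rc1.
  have [k2 [Hk2 E2]] := label_pos Hd Hdn Hs2 A2 Rc2.
  have Hm : (d - h1).+1 <= d - h2 by lia.
  have := mulN_le (n - d) Hm; rewrite mulSn; lia.
have -> : ninv r (sprod (t :: ts)) = (size ts).+1.
  have := ninv_step (sprod ts) Ht0 Htr; rewrite Hinv.
  have -> : (sprod ts t.+1 < sprod ts t) = false by lia.
  rewrite Hsg /= addn0 addn1; exact.
split => //; split.
- by rewrite EC size_set_nth HS; apply/maxn_idPr; lia.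
- apply/(all_nthP [::]) => i Hi; rewrite EC nth_set_nth /=; case: ifP => // _.
  by apply: Inth; move: Hi; rewrite EC size_set_nth HS; lia.
move=> j Hj; rewrite /sprod /= -/(sprod ts _).
have Nth : forall i, nth [::] C i = if i == t then c' else nth [::] C0 i.
  by move=> i; rewrite EC nth_set_nth.
rewrite !Nth.
case: (eqVneq j t) => [->|Njt].
  rewrite /stransp eqxx (negbTE (_ : t.-1 != t)); last by lia.
  by split => //; exists s2, h2.
case: (eqVneq j t.+1) => [->|Njt1].
  rewrite /stransp eqxx (negbTE (_ : t.+1 != t)) ?eqxx /=; last by lia.
  by split => //; exists s1, h1.
rewrite /stransp (negbTE Njt) (negbTE Njt1) (negbTE (_ : j.-1 != t)); last by lia.
exact: HE.
Qed.
Theorem proposition2p27 (d n : nat) (ts : seq nat) (Cr C : seq (seq nat)) :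
  0 < d -> d < n ->
  let r := d * (n - d) in
  all (fun t => 0 < t < r) ts ->
  is_Cright d n Cr ->
  Fseq d n ts Cr = Some C ->
  is_maxchain d n C ->
  (forall t, 0 < t <= r ->
     exists s h, [/\ admissible d n s h,
       rootop d s h (nth [::] Cr (sprod ts t).-1) = Some (nth [::] Cr (sprod ts t)) &
       rootop d s h (nth [::] C t.-1) = Some (nth [::] C t)]) /\
  (forall us : seq nat, all (fun u => 0 < u < r) us ->
     (forall x, 0 < x <= r -> sprod us x = sprod ts x) ->
     size ts <= size us).
Proof.
move=> Hd Hdn r Hts HCr HF _.
have ECr := Cr_eq Hd Hdn HCr.
have [[HS HA HE] Hinv] := chain_ind Hd Hdn ECr Hts HF.
split.
- by move=> t Ht; have [_ H] := HE t Ht.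
- move=> us Hus Heq; rewrite -Hinv (@ninv_ext _ _ (sprod us)); first exact: ninv_le.
  by move=> x Hx; rewrite Heq.
Qed.
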